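(* Let $(G,\theta)$ be a $1$-smooth cyclotomic pro-$p$ pair with $G$ torsion-free. If $p=2$, assume in addition that $\mathrm{Im}(\theta) \leq 1+4\mathbb{Z}_2$. Then $G$ is strongly Frattini-resistant.
   Context: $p$ is a prime. A cyclotomic pro-$p$ pair is a pair $(G,\theta)$ with $G$ a pro-$p$ group and $\theta: G\to 1+p\mathbb{Z}_p$ a continuous homomorphism. Let $\mathbb{Z}_p(1)$ denote $\mathbb{Z}_p$ with $G$-action $g\cdot v = \theta(g)v$. The pair is $1$-smooth if for every open subgroup $U$ of $G$ and every $n\in\mathbb{N}$, the quotient map $\mathbb{Z}_p(1)/p^n\mathbb{Z}_p(1)\to \mathbb{Z}_p(1)/p\mathbb{Z}_p(1)$ induces a surjection $H^1(U,\mathbb{Z}_p(1)/p^n\mathbb{Z}_p(1))\to H^1(U,\mathbb{Z}_p(1)/p\mathbb{Z}_p(1))$. Subgroups are closed; $\Phi(H)$ is the Frattini subgroup. A triple $(G,K,H)$ with $H\le K\le G$ is hierarchical if $x\in G$, $x^p\in H$ imply $x\in K$; $G$ is strongly Frattini-resistant if $(G,H,\Phi(H))$ is hierarchical for every subgroup $H$ of $G$. *)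

(* Defs.v *)
From HB Require Import structures.
From mathcomp Require Import all_boot all_order all_algebra.
From mathcomp Require Import all_classical all_reals all_analysis.

Set Implicit Arguments.
Unset Strict Implicit.
Unset Printing Implicit Defensive.

Local Open Scope classical_set_scope.

Section ProP.
Variable G : topologicalType.
Variables (mul : G -> G -> G) (inv : G -> G) (one : G).

Definition group_axioms :=
  [/\ forall x y z, mul x (mul y z) = mul (mul x y) z,
      forall x, mul one x = x,
      forall x, mul x one = x,
      forall x, mul (inv x) x = one &
      forall x, mul x (inv x) = one].

Definition topological_group :=
  [/\ group_axioms,
      continuous (fun xy : G * G => mul xy.1 xy.2) &
      continuous inv].

Fixpoint gpow (x : G) (k : nat) : G :=
  if k is k'.+1 then mul (gpow x k') x else one.

Definition is_subgroup (H : set G) :=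
  [/\ H one, forall x y, H x -> H y -> H (mul x y) & forall x, H x -> H (inv x)].

(* subgroups in the sense of the paper: closed subgroups *)
Definition closed_subgroup (H : set G) := is_subgroup H /\ closed H.

Definition normal_in (N : set G) :=
  forall g x, N x -> N (mul (inv g) (mul x g)).

(* N has index p^k in G: there are p^k coset representatives,
   every element lies in exactly one coset r N *)
Definition index_eq (N : set G) (m : nat) :=
  exists f : 'I_m -> G,
    forall x, exists! i : 'I_m, N (mul (inv (f i)) x).

Definition pro_p_group (p : nat) :=
  [/\ topological_group, compact [set: G], hausdorff_space G,
      totally_disconnected [set: G] &
      forall N, is_subgroup N -> open N -> normal_in N ->
        exists k, index_eq N (p ^ k)].

Definition torsion_free :=
  forall x k, (0 < k)%N -> gpow x k = one -> x = one.

Definition open_in (H M : set G) := exists O, open O /\ M = H `&` O.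

Definition maximal_open_subgroup (H M : set G) :=
  [/\ is_subgroup M, M `<=` H, M != H, open_in H M &
      forall K, is_subgroup K -> M `<=` K -> K `<=` H -> K = M \/ K = H].

Definition Frattini (H : set G) : set G :=
  [set x | H x /\ forall M, maximal_open_subgroup H M -> M x].

Definition hierarchical (p : nat) (K H : set G) :=
  forall x, H (gpow x p) -> K x.

Definition strongly_Frattini_resistant (p : nat) :=
  forall H, closed_subgroup H -> hierarchical p H (Frattini H).

(* A continuous homomorphism theta : G -> 1 + p Z_p, with Z_p the inverse
   limit of the Z/p^n; theta g n in [0, p^n) is the residue of theta(g)
   modulo p^n. *)
Definition cyclotomic_character (p : nat) (theta : G -> nat -> nat) :=
  [/\ forall g n, (theta g n < p ^ n)%N,
      forall g n, theta g n = theta g n.+1 %% p ^ n,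
      forall g h n, theta (mul g h) n = (theta g n * theta h n) %% p ^ n,
      forall g n, open [set x | theta x n = theta g n] &
      forall g, theta g 1 = 1%N].

(* continuous 1-cocycles U -> Z_p(1)/p^n Z_p(1), values encoded in [0,p^n) *)
Definition cocycle (p : nat) (theta : G -> nat -> nat) (U : set G) (n : nat)
    (c : G -> nat) :=
  [/\ forall g, U g -> (c g < p ^ n)%N,
      forall g h, U g -> U h ->
        c (mul g h) = (c g + theta g n * c h) %% p ^ n &
      forall g, U g -> exists V, [/\ open V, V g &
        forall x, V x -> U x -> c x = c g]].

(* c1, c2 : U -> Z/p^n differ by a coboundary g |-> g.a - a *)
Definition cohomologous (p : nat) (theta : G -> nat -> nat) (U : set G) (n : nat)
    (c1 c2 : G -> nat) :=
  exists a, (a < p ^ n)%N /\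
    forall g, U g -> c1 g = (c2 g + theta g n * a + (p ^ n - a)) %% p ^ n.

(* H^1(U, Z_p(1)/p^n) -> H^1(U, Z_p(1)/p) is surjective *)
Definition H1_reduction_surjective (p : nat) (theta : G -> nat -> nat)
    (U : set G) (n : nat) :=
  forall c, cocycle p theta U 1 c ->
    exists c', cocycle p theta U n c' /\
      cohomologous p theta U 1 (fun g => c' g %% p) c.

Definition one_smooth (p : nat) (theta : G -> nat -> nat) :=
  forall U, is_subgroup U -> open U ->
    forall n, (0 < n)%N -> H1_reduction_surjective p theta U n.

End ProP.

(* Main.v *)
Require Import Defs.
From HB Require Import structures.
From mathcomp Require Import all_boot all_order all_algebra all_fingroup all_solvable.
From mathcomp Require Import all_classical all_reals all_analysis finmap.
From mathcomp Require Import ring.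

Set Implicit Arguments.
Unset Strict Implicit.
Unset Printing Implicit Defensive.
Local Open Scope classical_set_scope.
Import GRing.Theory.

Definition ptal (T : topologicalType) (x : T) : Type := T.
Arguments ptal {T} x.
HB.instance Definition _ (T : topologicalType) (x : T) := Topological.on (ptal x).
HB.instance Definition _ (T : topologicalType) (x : T) := isPointed.Build (ptal x) x.

Section ZeroDim.
Variable T : topologicalType.

Lemma clopen_seq_cap (s : seq (set T)) :
  (forall C, C \in s -> clopen C) -> clopen [set z : T | forall C : set T, C \in s -> C z].
Proof.
elim: s => [_|C s IH hs].
  have -> : [set z : T | forall C : set T, C \in [::] -> C z] = setT.
    by apply/seteqP; split => z // _ C.
  exact: clopenT.
have -> : [set z : T | forall C' : set T, C' \in C :: s -> C' z] =
    C `&` [set z : T | forall C' : set T, C' \in s -> C' z].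
  apply/seteqP; split => z.
    by move=> h; split; [apply: h; rewrite inE eqxx | move=> C' Cs; apply: h; rewrite inE Cs orbT].
  by move=> [Cz h] C'; rewrite inE => /orP [/eqP -> | /h].
apply: clopenI; first by apply: hs; rewrite inE eqxx.
by apply: IH => C' Cs; apply: hs; rewrite inE Cs orbT.
Qed.

Hypothesis hT : hausdorff_space T.
Hypothesis cT : compact [set: T].
Hypothesis tdT : totally_disconnected [set: T].

Lemma separate_closed (A1 A2 : set T) : closed A1 -> closed A2 -> A1 `&` A2 = set0 ->
  exists U V, [/\ open U, open V, A1 `<=` U, A2 `<=` V & U `&` V = set0].
Proof.
move=> c1 c2 d12.
have nT := compact_normal hT cT.
have : set_nbhs A1 (~` A2).
  apply/set_nbhsP; exists (~` A2); split => //; first exact: closed_openC.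
  by move=> z A1z A2z; have : (A1 `&` A2) z by []; rewrite d12.
move=> /(nT A1 c1) [W /set_nbhsP [U [oU A1U UW]] clW].
exists U, (~` closure W); split => //.
- exact/closed_openC/closed_closure.
- by move=> z A2z clz; exact: (clW z clz).
- apply/seteqP; split => // z [Uz]; apply; apply: subset_closure; exact: UW.
Qed.

Let Q (x : T) := [set z : T | forall C : set T, clopen C -> C x -> C z].

Lemma Q_closed x : closed (Q x).
Proof.
have -> : Q x = \bigcap_(C in [set C | clopen C /\ C x]) C.
  by apply/seteqP; split => z h C; [move=> [] | move=> ? ?]; apply: h.
by apply: closed_bigI => C [[]].
Qed.

Lemma notQ (x z : T) : ~ Q x z -> exists C, [/\ clopen C, C x & ~ C z].
Proof.
move=> h; apply: contrapT => h2; apply: h => C cC Cx; apply: contrapT => nCz.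
by apply: h2; exists C.
Qed.

Lemma Q_connected x : connected (Q x).
Proof.
move=> B [b0 Bb0] [W1 oW1 BW1] [C1 cC1 BC1].
pose A2 := Q x `&` ~` W1.
have cB : closed B by rewrite BC1; apply: closedI => //; exact: Q_closed.
have cA2 : closed A2 by apply: closedI; [exact: Q_closed | exact: open_closedC].
have d : B `&` A2 = set0.
  by apply/seteqP; split => // z [+ [_ nO]]; rewrite BW1 => -[].
have [U [V [oU oV BU A2V dUV]]] := separate_closed cB cA2 d.
have QUV : Q x `<=` U `|` V.
  move=> z Qz; case: (pselect (W1 z)) => O1z.
    by left; apply: BU; rewrite BW1.
  by right; apply: A2V.
have cK : compact (~` (U `|` V)).
  apply: (subclosed_compact _ cT) => //; apply: open_closedC; exact: openU.
have : @cover_compact (ptal x) (~` (U `|` V)) by rewrite -compact_cover.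
move=> /(_ _ [set C : set T | clopen C /\ C x] (fun C => ~` C)) [].
- by move=> C [[_ cC] _]; exact: closed_openC.
- move=> z nz; have nQz : ~ Q x z by move=> /QUV.
  by have [C [clC Cx nCz]] := notQ nQz; exists C.
move=> D' sD' Kcov.
pose D := [set z : T | forall C : set T, C \in (D' : seq _) -> C z].
have clD : clopen D.
  apply: clopen_seq_cap => C CD; have /set_mem := sD' C CD; by case.
have Dx : D x by move=> C CD; have /set_mem := sD' C CD; case.
have DUV : D `<=` U `|` V.
  move=> z Dz; apply: contrapT => nz.
  by have [C /= CD' nCz] := Kcov z nz; apply: nCz; apply: Dz.
have QD : Q x `<=` D by move=> z Qz; apply: Qz.
have DU_clopen : clopen (D `&` U).
  split; first by apply: openI => //; case: clD.
  have -> : D `&` U = D `&` ~` V.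
    apply/seteqP; split => z [Dz h]; split => //.
      by move=> Vz; have : (U `&` V) z by []; rewrite dUV.
    by case: (DUV z Dz).
  by apply: closedI; [case: clD | exact: open_closedC].
have DV_clopen : clopen (D `&` V).
  split; first by apply: openI => //; case: clD.
  have -> : D `&` V = D `&` ~` U.
    apply/seteqP; split => z [Dz h]; split => //.
      by move=> Uz; have : (U `&` V) z by []; rewrite dUV.
    by case: (DUV z Dz).
  by apply: closedI; [case: clD | exact: open_closedC].
case: (DUV x Dx) => [Ux|Vx].
- (* A2 empty *)
  apply/seteqP; split => z.
    by rewrite BW1 => -[].
  move=> Qz; rewrite BW1; split => //; apply: contrapT => nO1.
  have Vz : V z by apply: A2V.
  have [_ Uz] : (D `&` U) z by apply: Qz.
  by have : (U `&` V) z by []; rewrite dUV.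
- exfalso.
  have Qb : Q x b0 by move: Bb0; rewrite BW1 => -[].
  have [_ Vb] : (D `&` V) b0 by apply: Qb.
  have UVb : (U `&` V) b0 by split => //; apply: BU.
  by move: UVb; rewrite dUV.
Qed.

Lemma cpt_td_zero_dim : zero_dimensional T.
Proof.
move=> x y xy.
have Qsub : Q x `<=` [set x].
  rewrite -(tdT (x:=x)) //.
  apply: connected_component_max; [by move=> C _ | by [] | exact: Q_connected].
have nQy : ~ Q x y.
  by move=> /Qsub /= yx; move: xy; rewrite yx eqxx.
by have [C [clC Cx nCz]] := notQ nQy; exists C.
Qed.

End ZeroDim.

Section GroupBasics.
Variable G : topologicalType.
Variables (mul : G -> G -> G) (inv : G -> G) (one : G).
Hypothesis TG : topological_group mul inv one.

Local Infix "**" := mul (at level 40, left associativity).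

Lemma GA_ : group_axioms mul inv one. Proof. by case: TG. Qed.
Lemma mulA x y z : x ** (y ** z) = x ** y ** z. Proof. by case: GA_. Qed.
Lemma mul1g x : one ** x = x. Proof. by case: GA_. Qed.
Lemma mulg1 x : x ** one = x. Proof. by case: GA_. Qed.
Lemma mulVg x : inv x ** x = one. Proof. by case: GA_. Qed.
Lemma mulgV x : x ** inv x = one. Proof. by case: GA_. Qed.
Lemma mulKg x y : inv x ** (x ** y) = y. Proof. by rewrite mulA mulVg mul1g. Qed.
Lemma mulKVg x y : x ** (inv x ** y) = y. Proof. by rewrite mulA mulgV mul1g. Qed.
Lemma mulgK x y : y ** x ** inv x = y. Proof. by rewrite -mulA mulgV mulg1. Qed.
Lemma mulgKV x y : y ** inv x ** x = y. Proof. by rewrite -mulA mulVg mulg1. Qed.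
Lemma mulg_inj x y z : x ** y = x ** z -> y = z.
Proof. by move=> h; rewrite -(mulKg x y) h mulKg. Qed.
Lemma invg_uniq x y : x ** y = one -> y = inv x.
Proof. by move=> h; apply: (@mulg_inj x); rewrite h mulgV. Qed.
Lemma invK x : inv (inv x) = x.
Proof. by symmetry; apply: invg_uniq; rewrite mulVg. Qed.
Lemma invM x y : inv (x ** y) = inv y ** inv x.
Proof. by symmetry; apply: invg_uniq; rewrite mulA mulgK mulgV. Qed.
Lemma inv1 : inv one = one.
Proof. by symmetry; apply: invg_uniq; rewrite mul1g. Qed.

Lemma mul_cont : continuous (fun xy : G * G => xy.1 ** xy.2). Proof. by case: TG. Qed.
Lemma inv_cont : continuous inv. Proof. by case: TG. Qed.

Lemma cont_mul (T : topologicalType) (f g : T -> G) :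
  continuous f -> continuous g -> continuous (fun z => f z ** g z).
Proof.
move=> cf cg x; apply: (@continuous2_cvg _ G G G _ _ f g mul (f x) (g x)).
- exact: (@mul_cont (f x, g x)).
- exact: cf.
- exact: cg.
Qed.

Lemma cont_cst (T : topologicalType) (a : G) : continuous (fun _ : T => a).
Proof. by move=> x; apply: cvg_cst. Qed.

Lemma cont_id : continuous (fun z : G => z).
Proof. by move=> x. Qed.

Lemma cont_inv (T : topologicalType) (f : T -> G) :
  continuous f -> continuous (fun z => inv (f z)).
Proof. by move=> cf x; apply: (continuous_comp (cf x)); apply: inv_cont. Qed.

Lemma nbhs_pre (T : topologicalType) (f : T -> G) x (B : set G) :
  continuous f -> nbhs (f x) B -> nbhs x [set z | B (f z)].
Proof. by move=> cf nB; apply: (cf x). Qed.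

Lemma open_pre (T : topologicalType) (f : T -> G) (B : set G) :
  continuous f -> open B -> open [set z | B (f z)].
Proof. by move=> cf oB; have := (continuousP f).1 cf B oB. Qed.

Lemma nbhs_transl (B : set G) g :
  nbhs one B -> nbhs g [set z | B (inv g ** z)].
Proof.
move=> nB; apply: (@nbhs_pre G (fun z => inv g ** z)).
  by apply: cont_mul; [exact: cont_cst | exact: cont_id].
by rewrite mulVg.
Qed.

Lemma open_of_nbhs (A : set G) : (forall z, A z -> nbhs z A) -> open A.
Proof. by move=> h; rewrite openE => z Az; apply: h. Qed.

Lemma subgroup_open (S : set G) :
  is_subgroup mul inv one S -> nbhs one S -> open S.
Proof.
move=> [S1 SM SV] nS; apply: open_of_nbhs => g Sg.
apply: filterS (nbhs_transl g nS) => z /= Sz.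
by rewrite -(mulKVg g z); apply: SM.
Qed.


Lemma filter_seq_cap (I : eqType) (F : set_system G) (FF : Filter F)
    (f : I -> set G) (s : seq I) :
  (forall i, i \in s -> F (f i)) -> F [set z | forall i, i \in s -> f i z].
Proof.
elim: s => [_|i s IH hs].
  by apply: filterS (filterT) => z _ i.
have : F (f i `&` [set z | forall j, j \in s -> f j z]).
  apply: filterI; first by apply: hs; rewrite inE eqxx.
  by apply: IH => j js; apply: hs; rewrite inE js orbT.
apply: filterS => z [fz h] j; rewrite inE => /orP [/eqP -> | /h] //.
Qed.

Hypothesis cG : compact [set: G].
Hypothesis hG : hausdorff_space G.
Hypothesis tdG : totally_disconnected [set: G].

Lemma clopen_sub (O : set G) : nbhs one O ->
  exists C, [/\ clopen C, C one & C `<=` O].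
Proof.
move=> nO.
have := zero_dimensional_cvg hG (cpt_td_zero_dim hG cG tdG) cG nO.
by move=> [D [Done clD] DO]; exists D.
Qed.

Lemma clopen_right_stable (C : set G) : clopen C ->
  exists B, nbhs one B /\ forall c b, C c -> B b -> C (c ** b).
Proof.
move=> [oC clC].
have cC : compact C by apply: (subclosed_compact clC cG).
have : @cover_compact (ptal one) C by rewrite -compact_cover.
move=> /(_ _ [set PQ : set G * set G | [/\ open PQ.1, nbhs one PQ.2 &
          forall a b, PQ.1 a -> PQ.2 b -> C (a ** b)]] (fun PQ => PQ.1)) [].
- by move=> PQ [].
- move=> c Cc.
  have : nbhs (c, one) [set xy : G * G | C (xy.1 ** xy.2)].
    apply: (@mul_cont (c, one)) => /=; rewrite mulg1.
    by move: oC; rewrite openE => /(_ c Cc).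
  move=> [[P1 P2] [/= nP1 nP2] sub].
  exists (P1°, P2) => /=; last exact: nbhs_singleton (nbhs_interior nP1).
  split => //; first exact: open_interior.
  move=> a b /interior_subset P1a P2b; exact: (sub (a, b)).
move=> D' sD' cov.
exists [set z | forall PQ, PQ \in (D' : seq _) -> PQ.2 z]; split.
  apply: filter_seq_cap => PQ PQD; have /set_mem [] := sD' PQ PQD => //.
move=> c b Cc Bb; have [PQ /= PQD P1c] := cov c Cc.
have /set_mem [_ _ h] := sD' PQ PQD; apply: h => //; exact: Bb.
Qed.


Lemma foldl_mulE a s : foldl mul a s = a ** foldl mul one s.
Proof.
elim: s a => [|b s IH] a /=; first by rewrite mulg1.
by rewrite IH [in RHS]IH mul1g mulA.
Qed.

Lemma foldl_inv s : foldl mul one (rev (map inv s)) = inv (foldl mul one s).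
Proof.
elim: s => [|b s IH] /=; first by rewrite inv1.
by rewrite rev_cons foldl_rcons IH mul1g (foldl_mulE b) invM.
Qed.

Definition gen_sub (B : set G) : set G :=
  [set g | exists s : seq G, (forall b, b \in s -> B b) /\ g = foldl mul one s].

Lemma gen_sub_subgroup (B : set G) : (forall b, B b -> B (inv b)) ->
  is_subgroup mul inv one (gen_sub B).
Proof.
move=> BV; split.
- by exists [::].
- move=> x y [s [sB ->]] [t [tB ->]]; exists (s ++ t); split.
    by move=> b; rewrite mem_cat => /orP [/sB|/tB].
  by rewrite foldl_cat [in RHS]foldl_mulE.
- move=> x [s [sB ->]]; exists (rev (map inv s)); split; last by rewrite foldl_inv.
  by move=> b; rewrite mem_rev => /mapP [c /sB Bc ->]; apply: BV.
Qed.

Lemma gen_sub_in (B : set G) b : B b -> gen_sub B b.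
Proof.
move=> Bb; exists [:: b]; split; last by rewrite /= mul1g.
by move=> c; rewrite inE => /eqP ->.
Qed.

Lemma open_subgroup_sub (O : set G) : nbhs one O ->
  exists S, [/\ is_subgroup mul inv one S, open S & S `<=` O].
Proof.
move=> nO; have [C [clC C1 CO]] := clopen_sub nO.
have [B [nB stab]] := clopen_right_stable clC.
pose B' := B `&` [set z | B (inv z)].
have nB' : nbhs one B'.
  apply: filterI => //; apply: (@nbhs_pre G inv one B inv_cont); by rewrite inv1.
have B'V : forall b, B' b -> B' (inv b).
  by move=> b [Bb Bib]; split => /=; [exact: Bib | rewrite invK].

have sg := gen_sub_subgroup B'V.
exists (gen_sub B'); split => //.
  by apply: subgroup_open => //; apply: filterS nB' => b; apply: gen_sub_in.
move=> g [s [sB ->]]; apply: CO.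
suff : forall a, C a -> C (foldl mul a s) by apply.
elim: s sB => [|b s IH] sB a Ca //=.
apply: IH; first by move=> c cs; apply: sB; rewrite inE cs orbT.
by apply: stab => //; have [] := sB b (mem_head _ _).
Qed.

Lemma conj_cont g : continuous (fun z => inv g ** z ** g).
Proof.
apply: cont_mul; last exact: cont_cst.
apply: cont_mul; [exact: cont_cst | exact: cont_id].
Qed.

Lemma open_normal_sub (O : set G) : nbhs one O ->
  exists N, [/\ is_subgroup mul inv one N, open N, normal_in mul inv N & N `<=` O].
Proof.
move=> nO; have [S [[S1 SM SV] oS SO]] := open_subgroup_sub nO.
pose N := [set z | forall g, S (inv g ** z ** g)].
have sgN : is_subgroup mul inv one N.
  split.
  - by move=> g; rewrite mulg1 mulVg.
  - move=> x y Nx Ny g.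
    have -> : inv g ** (x ** y) ** g = (inv g ** x ** g) ** (inv g ** y ** g).
      by rewrite !mulA mulgK.
    exact: SM.
  - move=> x Nx g.
    have -> : inv g ** inv x ** g = inv (inv g ** x ** g).
      by rewrite !invM invK mulA.
    exact: SV.
exists N; split => //.
- apply: subgroup_open => //.
  have : @cover_compact (ptal one) [set: G] by rewrite -compact_cover.
  move=> /(_ _ [set: G] (fun g => [set z | S (inv g ** z)])) [].
  + move=> g _; apply: (@open_pre G (fun z => inv g ** z)) => //.
    by apply: cont_mul; [exact: cont_cst | exact: cont_id].
  + by move=> z _; exists z => //=; rewrite mulVg.
  move=> D' _ cov.
  have : nbhs one [set z | forall g, g \in (D' : seq G) -> S (inv g ** z ** g)].
    apply: filter_seq_cap => g _.
    apply: (@nbhs_pre G (fun z => inv g ** z ** g)); first exact: conj_cont.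
    rewrite mulg1 mulVg; move: oS; rewrite openE; apply; exact: S1.
  apply: filterS => z h k.
  have [g /= gD Sgk] := cov k I.
  have Sz := h g gD.
  have -> : inv k ** z ** k = inv (inv g ** k) ** (inv g ** z ** g) ** (inv g ** k).
    by rewrite invM invK !mulA !mulgK.
  exact: (SM _ _ (SM _ _ (SV _ Sgk) Sz) Sgk).
- move=> g x Nx h.
  have -> : inv h ** (inv g ** (x ** g)) ** h = inv (g ** h) ** x ** (g ** h).
    by rewrite invM !mulA.
  exact: Nx.
- move=> z Nz; apply: SO; have := Nz one; by rewrite inv1 mul1g mulg1.
Qed.


Section Quot.
Variable N : set G.
Hypothesis sgN : is_subgroup mul inv one N.
Hypothesis nN : normal_in mul inv N.
Variable m : nat.
Variable f : 'I_m -> G.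
Hypothesis hf : forall x, exists! i, N (inv (f i) ** x).

Lemma N1 : N one. Proof. by case: sgN. Qed.
Lemma NM a b : N a -> N b -> N (a ** b). Proof. by case: sgN => _ h _; apply: h. Qed.
Lemma NV a : N a -> N (inv a). Proof. by case: sgN => _ _ h; apply: h. Qed.
Lemma Nconj a b : N a -> N (b ** a ** inv b).
Proof. by move=> Na; have := nN (inv b) Na; rewrite invK mulA. Qed.

Lemma hf_ex x : exists i, N (inv (f i) ** x).
Proof. by have [i [h _]] := hf x; exists i. Qed.

Definition pi x : 'I_m := sval (cid (hf_ex x)).

Lemma pi_spec x : N (inv (f (pi x)) ** x).
Proof. exact: (svalP (cid (hf_ex x))). Qed.

Lemma pi_uniq x i : N (inv (f i) ** x) -> pi x = i.
Proof.
move=> h; have [j [_ u]] := hf x.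
by rewrite -(u _ (pi_spec x)) (u _ h).
Qed.

Lemma pi_eqP x y : pi x = pi y <-> N (inv x ** y).
Proof.
split => [e|h].
  have a := pi_spec x; have b := pi_spec y; rewrite e in a.
  have := NM (NV a) b; by rewrite invM invK !mulA mulgK.
apply/esym/pi_uniq.
have := NM (pi_spec x) h; by rewrite !mulA mulgK.
Qed.

Lemma pi_f i : pi (f i) = i.
Proof. by apply: pi_uniq; rewrite mulVg; exact: N1. Qed.

Lemma pi_mul x y : pi (x ** y) = pi (f (pi x) ** f (pi y)).
Proof.
apply/esym/pi_eqP.
have n1 := pi_spec x; have n2 := pi_spec y.
have := NM (Nconj (inv (f (pi y))) n1) n2.
by rewrite invK invM !mulA mulgK.
Qed.

Definition qmul i j := pi (f i ** f j).
Definition qinv i := pi (inv (f i)).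
Definition qone := pi one.

Lemma qmul_pi x y : qmul (pi x) (pi y) = pi (x ** y).
Proof. by rewrite /qmul -pi_mul. Qed.

Lemma qinv_pi x : qinv (pi x) = pi (inv x).
Proof.
apply/pi_eqP; rewrite invK.
have := Nconj (f (pi x)) (NV (pi_spec x)).
by rewrite invM invK !mulA mulgK.
Qed.

Lemma qA : associative qmul.
Proof. by move=> i j k; rewrite -(pi_f i) -(pi_f j) -(pi_f k) !qmul_pi mulA. Qed.
Lemma q1 : left_id qone qmul.
Proof. by move=> i; rewrite -(pi_f i) /qone qmul_pi mul1g. Qed.
Lemma qV : left_inverse qone qinv qmul.
Proof. by move=> i; rewrite -(pi_f i) qinv_pi qmul_pi mulVg. Qed.

Definition Qt := 'I_m.
HB.instance Definition _ := Finite.on Qt.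
HB.instance Definition _ := Finite_isGroup.Build Qt qA q1 qV.

Definition piQ (x : G) : Qt := pi x.

Lemma piQM x y : piQ (x ** y) = (piQ x * piQ y)%g.
Proof. exact/esym/qmul_pi. Qed.
Lemma piQ1 : piQ one = 1%g. Proof. by []. Qed.
Lemma piQV x : piQ (inv x) = ((piQ x)^-1)%g.
Proof. exact/esym/qinv_pi. Qed.
Lemma piQ_eq x y : piQ x = piQ y <-> N (inv x ** y).
Proof. exact: pi_eqP. Qed.
Lemma piQ_gpow x k : piQ (gpow mul one x k) = (piQ x ^+ k)%g.
Proof. by elim: k => [|k IH] //=; rewrite piQM IH expgSr. Qed.
Lemma card_Qt : #|[set: Qt]%SET| = m.
Proof. by rewrite cardsT card_ord. Qed.


Variables (p k : nat).
Hypothesis pp : prime p.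
Hypothesis mE : m = (p ^ k)%N.
Hypothesis oN : open N.
Variables (Hs : set G) (x : G).
Hypothesis sgH : is_subgroup mul inv one Hs.
Hypothesis nHx : forall h, Hs h -> ~ N (inv h ** x).

Definition Hbset : {set Qt} := [set i : Qt | `[< exists h, Hs h /\ piQ h = i >]].

Lemma HbP i : reflect (exists h, Hs h /\ piQ h = i) (i \in Hbset).
Proof. by rewrite inE; apply: asboolP. Qed.

Lemma Hb_gs : group_set Hbset.
Proof.
apply/group_setP; split.
  by apply/HbP; exists one; split; [case: sgH | exact: piQ1].
move=> a b /HbP [h [Hh <-]] /HbP [h' [Hh' <-]]; apply/HbP; exists (h ** h'); split.
  by case: sgH => _ hM _; apply: hM.
exact: piQM.
Qed.

Definition Hb := Group Hb_gs.
Definition xb := piQ x.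

Lemma xb_notin : xb \notin Hb.
Proof.
apply/negP => /HbP [h [Hh e]]; apply: (nHx Hh).
by apply/piQ_eq.
Qed.

Definition L := (Hb <*> <[xb]>)%G.

Lemma xb_in_L : xb \in L.
Proof.
have : <[xb]>%g \subset L by exact: joing_subr.
by rewrite cycle_subG.
Qed.

Definition Pw (K : {group Qt}) := [&& Hb \subset K, K \subset L & xb \notin K].

Lemma exists_W : exists W : {group Qt},
  [/\ Hb \subset W, W \subset L, xb \notin W & maximal W L].
Proof.
have PHb : Pw Hb by rewrite /Pw subxx joing_subl xb_notin.
have [W maxW _] := maxgroup_exists PHb.
have /maxgroupP [/and3P [HbW WL xW] mx] := maxW.
exists W; split => //.
apply/maxgroupP; split.
  rewrite properE WL /=; apply/negP => LW; move/negP: xW; apply.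
  by apply: (fintype.subsetP LW); apply: xb_in_L.
move=> K KL WK; case xK: (xb \in K).
  exfalso; move/andP: KL => [_ /negP]; apply.
  by rewrite join_subG (fintype.subset_trans HbW WK) cycle_subG.
apply: mx => //; rewrite /Pw (fintype.subset_trans HbW WK) (proper_sub KL) xK.
done.
Qed.


Lemma pgroupL : pgroup p L.
Proof.
apply: (@pgroupS _ _ [set: Qt]%G); first exact: finset.subsetT.
by rewrite /pgroup card_Qt mE pnatX pnat_id.
Qed.

Lemma chib_exists : exists chib : Qt -> nat,
  [/\ forall l, chib l < p,
      forall l1 l2, l1 \in L -> l2 \in L -> chib (l1 * l2)%g = (chib l1 + chib l2) %% p,
      forall w, w \in Hb -> chib w = 0 & chib xb = 1].
Proof.
have [W [HbW WL xW mWL]] := exists_W.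
have Wn := p_maximal_normal pgroupL mWL.
have idx := p_maximal_index pgroupL mWL.
have nWL : L \subset 'N(W)%g := normal_norm Wn.
have cardq : #|(L / W)%g| = p by rewrite card_quotient // idx.
pose y := coset W xb.
have yq : y \in (L / W)%g := mem_quotient W xb_in_L.
have xN : xb \in 'N(W)%g by apply: (fintype.subsetP nWL); exact: xb_in_L.
have y1 : y != 1%g.
  apply/negP => /eqP e; move/negP: xW; apply; exact: coset_idr.
have oy : #[y]%g = p.
  have d := order_dvdG yq; rewrite cardq in d.
  have [_ pd] := primeP pp; case/orP: (pd _ d) => /eqP // e1.
  by exfalso; move: y1; rewrite -order_eq1 e1.
have LWc : (L / W)%g \subset <[y]>%g.
  have : <[y]>%g == (L / W)%g by rewrite eqEcard cycle_subG yq /= cardq -oy.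
  by move/eqP => <-.
have ex : forall l, exists i, l \in L -> coset W l = (y ^+ i)%g.
  move=> l; case: (boolP (l \in L)) => lL; last by exists 0.
  have : coset W l \in <[y]>%g.
    by apply: (fintype.subsetP LWc); exact: mem_quotient.
  by move/cycleP => [i ->]; exists i.
pose chib l := (sval (cid (ex l))) %% p.
have p0 : 0 < p by exact: prime_gt0.
have chib_lt : forall l, chib l < p by move=> l; rewrite /chib ltn_pmod.
have spec : forall l, l \in L -> coset W l = (y ^+ chib l)%g.
  by move=> l lL; rewrite /chib -oy expg_mod_order; exact: (svalP (cid (ex l)) lL).
have uniq : forall l a, l \in L -> coset W l = (y ^+ a)%g -> chib l = a %% p.
  move=> l a lL E; have e := spec l lL; rewrite E in e.
  move/eqP: e; rewrite eq_expg_mod_order oy => /eqP ->.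
  by rewrite modn_small.
exists chib; split => //.
- move=> l1 l2 l1L l2L; apply: uniq; first exact: groupM.
  have l1N : l1 \in 'N(W)%g by apply: (fintype.subsetP nWL).
  have l2N : l2 \in 'N(W)%g by apply: (fintype.subsetP nWL).
  transitivity (coset W l1 * coset W l2)%g; first exact: morphM.
  by rewrite (spec _ l1L) (spec _ l2L) expgD.
- move=> w wHb; have wW : w \in W by apply: (fintype.subsetP HbW).
  have wL : w \in L by apply: (fintype.subsetP WL).
  by rewrite (uniq w 0 wL) ?mod0n // coset_id.
- by rewrite (uniq xb 1 xb_in_L) ?modn_small ?prime_gt1 // expg1.
Qed.


Lemma quot_char : exists (V : set G) (chi : G -> nat),
  [/\ is_subgroup mul inv one V, open V, Hs `<=` V, V x &
   [/\ (forall g, V g -> chi g < p),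
       (forall g h, V g -> V h -> chi (g ** h) = (chi g + chi h) %% p),
       (forall g, V g -> exists U, [/\ open U, U g & forall z, U z -> V z -> chi z = chi g]),
       (forall h, Hs h -> chi h = 0) & chi x = 1]].
Proof.
have [chib [lt add0 hb0 xb1]] := chib_exists.
exists [set g | piQ g \in L], (fun g => chib (piQ g)).
have sgV : is_subgroup mul inv one [set g | piQ g \in L].
  split => /=.
  - by rewrite piQ1 group1.
  - by move=> a b aL bL; rewrite piQM groupM.
  - by move=> a aL; rewrite piQV groupV.
have HbL : forall h, Hs h -> piQ h \in L.
  move=> h Hh; have : piQ h \in Hb by apply/HbP; exists h.
  by apply: (fintype.subsetP (joing_subl _ _)).
split => //.
- apply: subgroup_open => //.
  have : nbhs one N by move: oN; rewrite openE; apply; exact: N1.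
  apply: filterS => n Nn /=.
  have -> : piQ n = piQ one by apply/esym/piQ_eq; rewrite inv1 mul1g.
  by rewrite piQ1 group1.
- exact: xb_in_L.
split => //.
- move=> a b aL bL; rewrite piQM; exact: add0.
- move=> g Vg; exists [set z | N (inv g ** z)]; split => /=.
  + apply: (@open_pre G (fun z => inv g ** z)) => //.
    by apply: cont_mul; [exact: cont_cst | exact: cont_id].
  + by rewrite mulVg; exact: N1.
  + by move=> z Nz _; have -> : piQ z = piQ g by apply/esym/piQ_eq.
- move=> h Hh; apply: hb0; by apply/HbP; exists h.
Qed.

End Quot.

Lemma exists_char (p : nat) (Hs : set G) (x : G) :
  prime p ->
  (forall N, is_subgroup mul inv one N -> open N -> normal_in mul inv N ->
     exists k, index_eq mul inv N (p ^ k)) ->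
  closed_subgroup mul inv one Hs -> ~ Hs x ->
  exists (V : set G) (chi : G -> nat),
  [/\ is_subgroup mul inv one V, open V, Hs `<=` V, V x &
   [/\ (forall g, V g -> chi g < p),
       (forall g h, V g -> V h -> chi (g ** h) = (chi g + chi h) %% p),
       (forall g, V g -> exists U, [/\ open U, U g & forall z, U z -> V z -> chi z = chi g]),
       (forall h, Hs h -> chi h = 0) & chi x = 1]].
Proof.
move=> pp hidx [sgH clH] nHx.
pose O := [set n | ~ Hs (x ** inv n)].
have nO : nbhs one O.
  have oO : open O.
    apply: (@open_pre G (fun n => x ** inv n) (~` Hs)); last exact: closed_openC.
    apply: cont_mul; [exact: cont_cst | apply: cont_inv; exact: cont_id].
  by move: oO; rewrite openE; apply; rewrite /O /= inv1 mulg1.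
have [N [sgN oN nN NO]] := open_normal_sub nO.
have [k [f hf]] := hidx N sgN oN nN.
have nHx' : forall h, Hs h -> ~ N (inv h ** x).
  move=> h Hh Nn; have := NO _ Nn; rewrite /O /= invM invK mulKVg; by [].
exact: (quot_char sgN nN hf pp erefl oN sgH nHx').
Qed.


Section Coh.
Variables (p : nat) (theta : G -> nat -> nat) (V Hs : set G) (c : G -> nat) (x : G).
Hypothesis pp : prime p.
Hypothesis p2 : p = 2 -> forall g, theta g 2 = 1.
Hypothesis thcomp : forall g n, theta g n = theta g n.+1 %% p ^ n.
Hypothesis thmul : forall g h n, theta (g ** h) n = (theta g n * theta h n) %% p ^ n.
Hypothesis th1 : forall g, theta g 1 = 1.
Hypothesis sgV : is_subgroup mul inv one V.
Hypothesis sgH : is_subgroup mul inv one Hs.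
Hypothesis HV : Hs `<=` V.
Hypothesis Vx : V x.
Hypothesis cc : cocycle mul p theta V 2 c.
Hypothesis cH : forall h, Hs h -> c h %% p = 0.
Hypothesis cx : c x %% p = 1.

Lemma q_gt1 : 1 < p ^ 2.
Proof. have p1 := prime_gt1 pp; rewrite (ltn_exp2l 0 2 p1) //. Qed.

Definition toR (n : nat) : 'Z_(p ^ 2) := (n%:R)%R.

Lemma valR n : (toR n : nat) = n %% p ^ 2.
Proof. exact: val_Zp_nat q_gt1 n. Qed.

Lemma toR_eq a b : toR a = toR b <-> a %% p ^ 2 = b %% p ^ 2.
Proof.
split => [e|e]; first by rewrite -!valR e.
by apply: val_inj; rewrite /= !valR.
Qed.

Lemma toR_mod n : toR (n %% p ^ 2) = toR n.
Proof. by apply/toR_eq; rewrite modn_mod. Qed.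
Lemma toRD a b : toR (a + b) = (toR a + toR b)%R.
Proof. exact: natrD. Qed.
Lemma toRM a b : toR (a * b) = (toR a * toR b)%R.
Proof. exact: natrM. Qed.
Lemma toR0 : toR 0 = 0%R. Proof. by []. Qed.
Lemma toR1 : toR 1 = 1%R. Proof. by []. Qed.

Definition P := toR p.
Lemma P2 : (P * P = 0)%R.
Proof. by rewrite /P -toRM -toR0; apply/toR_eq; rewrite mulnn modnn mod0n. Qed.

Lemma PmodP n : (P * toR n = P * toR (n %% p))%R.
Proof.
rewrite {1}(divn_eq n p) toRD toRM mulrDr mulrA (mulrC _ (toR p)) -/P.
by rewrite mulrA P2 mul0r add0r.
Qed.

Definition Th g := toR (theta g 2).
Definition C g := toR (c g).

Lemma Vone : V one. Proof. by case: sgV. Qed.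
Lemma VM a b : V a -> V b -> V (a ** b). Proof. by case: sgV => _ h _; apply: h. Qed.
Lemma VV a : V a -> V (inv a). Proof. by case: sgV => _ _ h; apply: h. Qed.
Lemma Hone : Hs one. Proof. by case: sgH. Qed.
Lemma HM a b : Hs a -> Hs b -> Hs (a ** b). Proof. by case: sgH => _ h _; apply: h. Qed.
Lemma HVi a : Hs a -> Hs (inv a). Proof. by case: sgH => _ _ h; apply: h. Qed.

Lemma C_mul g h : V g -> V h -> C (g ** h) = (C g + Th g * C h)%R.
Proof.
move=> Vg Vh; case: cc => _ e _.
by rewrite /C e // toR_mod toRD toRM.
Qed.

Lemma Th_mul g h : Th (g ** h) = (Th g * Th h)%R.
Proof. by rewrite /Th thmul toR_mod toRM. Qed.

Lemma Th_dec g : Th g = (1 + P * toR (theta g 2 %/ p))%R.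
Proof.
rewrite /Th {1}(divn_eq (theta g 2) p).
have -> : theta g 2 %% p = 1 by have := thcomp g 1; rewrite th1 expn1 => <-.
by rewrite toRD toRM toR1 addrC mulrC.
Qed.

Lemma C_H h : Hs h -> C h = (P * toR (c h %/ p))%R.
Proof.
move=> Hh; rewrite /C {1}(divn_eq (c h) p) cH // addn0 toRM mulrC.
by [].
Qed.

Lemma C_Hadd g h : Hs g -> Hs h -> C (g ** h) = (C g + C h)%R.
Proof.
move=> Hg Hh; rewrite C_mul; [|exact: HV|exact: HV].
rewrite Th_dec (C_H Hh) mulrDl mul1r.
have -> : (P * toR (theta g 2 %/ p) * (P * toR (c h %/ p)) = 0)%R.
  by rewrite mulrACA P2 mul0r.
by rewrite addr0.
Qed.

Lemma C_one : C one = 0%R.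
Proof.
have := C_Hadd Hone Hone; rewrite mulg1 => /eqP.
by rewrite -subr_eq0 opprD addrA subrr add0r oppr_eq0 => /eqP.
Qed.

Lemma C_Hinv h : Hs h -> C (inv h) = (- C h)%R.
Proof.
move=> Hh; apply/eqP; rewrite -subr_eq0 opprK.
rewrite -C_Hadd; [|exact: HVi|by []].
by rewrite mulVg C_one.
Qed.

Lemma C_Hpow k j : Hs k -> C (gpow mul one k j) = (C k *+ j)%R.
Proof.
move=> Hk; elim: j => [|j IH] /=; first exact: C_one.
have Hkj : Hs (gpow mul one k j).
  by elim: j {IH} => [|j IHj] /=; [exact: Hone | apply: HM].
by rewrite C_Hadd // IH mulrS addrC.
Qed.

Lemma C0 g : V g -> C g = 0%R <-> c g = 0.
Proof.
move=> Vg; rewrite /C -toR0 toR_eq mod0n modn_small //.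
by case: cc => h _ _; apply: h.
Qed.


Hypothesis oV : open V.

Lemma gpow_sub (S : set G) k j : is_subgroup mul inv one S -> S k -> S (gpow mul one k j).
Proof.
move=> [S1 SM _] Sk; elim: j => [|j IH] //=; exact: SM.
Qed.

Lemma c_lt g : V g -> c g < p ^ 2.
Proof. by case: cc => h _ _; apply: h. Qed.

Definition Mset := [set h | Hs h /\ c h = 0].

Lemma M_max : (exists h0, Hs h0 /\ c h0 <> 0) ->
  maximal_open_subgroup mul inv one Hs Mset.
Proof.
move=> [h0 [Hh0 ch0]].
have Mz : forall h, Hs h -> c h = 0 <-> C h = 0%R by move=> h Hh; rewrite C0 //; apply: HV.
split.
- split.
  + by split; [exact: Hone | apply/Mz; [exact: Hone | exact: C_one]].
  + move=> a b [Ha ca] [Hb cb]; split; first exact: HM.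
    by apply/Mz; [exact: HM | rewrite C_Hadd // (proj1 (Mz _ Ha) ca) (proj1 (Mz _ Hb) cb) addr0].
  + move=> a [Ha ca]; split; first exact: HVi.
    by apply/Mz; [exact: HVi | rewrite C_Hinv // (proj1 (Mz _ Ha) ca) oppr0].
- by move=> h [].
- apply/eqP => e; apply: ch0.
  have : Mset h0 by rewrite e.
  by case.
- exists [set z | V z /\ c z = 0]; split.
    apply: open_of_nbhs => z [Vz cz].
    case: cc => _ _ /(_ z Vz) [U [oU Uz hU]].
    have : nbhs z (U `&` V).
      by move: (openI oU oV); rewrite openE; apply.
    apply: filterS => y [Uy Vy]; split => //; rewrite hU //.
  apply/seteqP; split => h.
    by move=> [Hh ch]; split => //; split => //; apply: HV.
  by move=> [Hh [_ ch]].
- move=> K [K1 KM KV] MK KH.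
  case: (pselect (exists k, K k /\ c k <> 0)) => [[k [Kk ck]]|nk]; last first.
    left; apply/seteqP; split => // h Kh; split; first exact: KH.
    by apply: contrapT => ch; apply: nk; exists h.
  right; apply/seteqP; split => // h Hh.
  have Hk := KH _ Kk.
  pose a := c k %/ p; pose b := c h %/ p.
  have p0 := prime_gt0 pp.
  have ck_eq : c k = a * p by rewrite {1}(divn_eq (c k) p) cH // addn0.
  have a0 : 0 < a by rewrite lt0n; apply/eqP => a0; apply: ck; rewrite ck_eq a0.
  have ap : a < p.
    by rewrite ltn_divLR // mulnn; apply: c_lt; apply: HV.
  have cop : gcdn a p = 1.
    by rewrite gcdnC; apply/eqP; rewrite -/(coprime p a) prime_coprime // gtnNdvd.
  have [u _ du] := Bezoutr a p0; rewrite cop in du.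
  pose j := b * u * (p - 1).
  have Kkj : K (gpow mul one k j) by apply: gpow_sub.
  have Hkj : Hs (gpow mul one k j) by apply: gpow_sub.
  have Ceq : C (gpow mul one k j) = C h.
    rewrite C_Hpow // (C_H Hk) (C_H Hh) -/a -/b -mulr_natr.
    have e1 : (P * toR (1 + u * a) = 0)%R.
      by rewrite PmodP; move/eqP: du => ->; rewrite toR0 mulr0.
    have e2 : (toR (p - 1) = P - 1)%R by rewrite /toR natrB // prime_gt0.
    rewrite toRD toRM toR1 in e1.
    have -> : ((j%:R)%R = toR b * toR u * (P - 1))%R by rewrite -e2 -!toRM.
    apply/eqP; rewrite -subr_eq0; apply/eqP.
    have -> : (P * toR a * (toR b * toR u * (P - 1)) - P * toR b =
        (P * P) * (toR a * toR b * toR u) - toR b * (P * (1 + toR u * toR a)))%R by ring.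
    by rewrite P2 e1 mul0r mulr0 subrr.
  have Mm : Mset (inv (gpow mul one k j) ** h).
    split; first by apply: HM => //; apply: HVi.
    apply/(C0 (HV _)); first by apply: HM => //; apply: HVi.
    rewrite C_Hadd; [|exact: HVi|by []].
    by rewrite C_Hinv // Ceq addNr.
  by rewrite -(mulKVg (gpow mul one k j) h); apply: KM => //; apply: MK.
Qed.


Lemma Th_one : Th one = 1%R.
Proof.
have := Th_mul one one; rewrite mulg1 Th_dec.
set e := (P * _)%R => h.
have ee : (e * e = 0)%R by rewrite /e mulrACA P2 mul0r.
have : (e = 0)%R.
  have : ((1 + e) - (1 + e) * (1 + e) = - e - e * e)%R by ring.
  by rewrite -h subrr ee subr0 => /esym /eqP; rewrite oppr_eq0 => /eqP.
by move=> ->; rewrite addr0.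
Qed.

Lemma Th_pow i : Th (gpow mul one x i) = (Th x ^+ i)%R.
Proof. by elim: i => [|i IH] /=; [exact: Th_one | rewrite Th_mul IH exprSr]. Qed.

Lemma C_pow i : C (gpow mul one x i) = ((\sum_(j < i) Th x ^+ j) * C x)%R.
Proof.
elim: i => [|i IH] /=; first by rewrite big_ord0 mul0r C_one.
rewrite C_mul //; last exact: gpow_sub.
by rewrite IH Th_pow big_ord_recr /= mulrDl.
Qed.

Definition tx := toR (theta x 2 %/ p).

Lemma Tpow j : (Th x ^+ j = 1 + (P * tx) * j%:R)%R.
Proof.
have ee : (P * tx * (P * tx) = 0)%R by rewrite mulrACA P2 mul0r.
elim: j => [|j IH]; first by rewrite expr0 mulr0 addr0.
rewrite exprS IH Th_dec -/tx mulrS.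
have -> : ((1 + P * tx) * (1 + P * tx * j%:R) =
   1 + P * tx * (1 + j%:R) + (P * tx * (P * tx)) * j%:R)%R by ring.
by rewrite ee mul0r addr0.
Qed.

Lemma sum_T : (\sum_(j < p) Th x ^+ j = P)%R.
Proof.
under eq_bigr => j _ do rewrite Tpow.
under eq_bigr => j _ do rewrite mulr_natr.
rewrite big_split /= sumr_const card_ord sumrMnr.
have -> : (\sum_(i < p) (i : nat))%N = 'C(p, 2).
  by rewrite -(big_mkord xpredT (fun i => i)) bin2_sum.
have -> : ((P * tx) *+ 'C(p, 2) = 0)%R.
  case: (boolP (p == 2)) => [/eqP e2|ne2].
    by rewrite /tx (p2 e2 x) divn_small ?prime_gt1 // toR0 mulr0 mul0rn.
  have p2' : 2 < p by rewrite ltn_neqAle eq_sym ne2 prime_gt1.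
  have /dvdnP [r ->] : p %| 'C(p, 2) by apply: prime_dvd_bin => //; rewrite p2'.
  rewrite -mulr_natr natrM -/(toR r) -/(toR p) -/P.
  have -> : (P * tx * (toR r * P) = (P * P) * (tx * toR r))%R by ring.
  by rewrite P2 mul0r.
by rewrite addr0.
Qed.

Lemma C_xp : C (gpow mul one x p) = P.
Proof.
rewrite C_pow sum_T /C {1}(divn_eq (c x) p) cx toRD toRM toR1 -/P.
have -> : (P * (toR (c x %/ p) * P + 1) = (P * P) * toR (c x %/ p) + P)%R by ring.
by rewrite P2 mul0r add0r.
Qed.

Lemma coh_contra : Defs.Frattini mul inv one Hs (gpow mul one x p) -> False.
Proof.
move=> [Hxp Fr].
have cxp0 : c (gpow mul one x p) = 0.
  case: (pselect (exists h0, Hs h0 /\ c h0 <> 0)) => [ex|nex].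
    by have [_ ->] := Fr _ (M_max ex).
  by apply: contrapT => ne; apply: nex; exists (gpow mul one x p).
have := proj2 (C0 (@gpow_sub V x p sgV Vx)) cxp0; rewrite C_xp /P -toR0 toR_eq mod0n.
rewrite modn_small; first by move=> p0; move: (prime_gt0 pp); rewrite p0.
by rewrite -{1}(expn1 p) ltn_exp2l // prime_gt1.
Qed.

End Coh.
End GroupBasics.

Theorem mainTheorem10 (p : nat) (G : topologicalType)
    (mul : G -> G -> G) (inv : G -> G) (one : G)
    (theta : G -> nat -> nat) :
  prime p ->
  pro_p_group mul inv one p ->
  cyclotomic_character mul p theta ->
  one_smooth mul inv one p theta ->
  torsion_free mul one ->
  (p = 2%N -> forall g, theta g 2 = 1%N) ->
  strongly_Frattini_resistant mul inv one p.
Proof.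
move=> pp [TG cG hG tdG hidx] [thlt thcomp thmul thopen th1] smooth tf p2.
move=> H clH x Fx.
apply: contrapT => nHx.
have [V [chi [sgV oV HV Vx [chilt chiadd chiloc chiH chix]]]] :=
  exists_char TG cG hG tdG pp hidx clH nHx.
have coc : cocycle mul p theta V 1 chi.
  split.
  - by move=> g Vg; rewrite expn1; apply: chilt.
  - by move=> g h Vg Vh; rewrite th1 mul1n expn1 chiadd.
  - exact: chiloc.
have [c [cc coh]] := smooth V sgV oV 2 erefl chi coc.
have cmod : forall g, V g -> c g %% p = chi g.
  move: coh => [a [alt ha]] g Vg; have := ha g Vg.
  rewrite th1 mul1n expn1 in alt * => ->.
  by rewrite -addnA subnKC ?(ltnW alt) // modnDr modn_small // chilt.
have sgH : is_subgroup mul inv one H by case: clH.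
apply: (coh_contra TG pp p2 thcomp thmul th1 sgV sgH HV Vx cc _ _ oV Fx).
- by move=> h Hh; rewrite cmod ?chiH //; apply: HV.
- by rewrite cmod.
Qed.
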